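(* Let $c=0$, so $f_0(z)=z^2$. For $z_0\in\mathbb{C}$ and $q\in(0,1)$ let $(z_q(n))_{n\ge0}$ be the fractional-order Julia sequence defined by $z_q(0)=z_0$ and $$z_q(n)=z_0+\frac{1}{\Gamma(q)}\sum_{i=1}^{n}\frac{\Gamma(n-i+q)}{\Gamma(n-i+1)}\,f_0\big(z_q(i-1)\big),\qquad n\ge1.$$ Then as $q\downarrow 0$ the sequence becomes $z_0,\ z_0^2+z_0,\ (z_0^2+z_0)^2+z_0,\dots$, i.e. for every $n\ge0$, $\lim_{q\downarrow0}z_q(n)=P_{z_0}^{\,n+1}(0)$, where $P_{a}(w)=w^2+a$. Hence the fractional-order filled Julia set for $c=0$ (the set of $z_0$ for which $(z_q(n))$ remains bounded) coincides, in the limit $q\downarrow0$, with the classical Mandelbrot set $\{a\in\mathbb{C}: (P_a^{\,n}(0))_{n\ge1}\text{ bounded}\}$.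
   Context: The recursion is the numerical solution of the Caputo-like fractional difference initial value problem $\Delta^q z(t)=f_c(z(t+q-1))$, $t\in\mathbb{N}_{1-q}$, $z(0)=z_0$, of order $q\in(0,1)$, with $f_c(z)=z^2+c$; for fixed $c$ and variable initial point $z_0$ it defines the fractional-order (filled) Julia map. $\Gamma$ is Euler's Gamma function. *)

(* Defs.v *)
From Stdlib Require Import Reals.
From Coquelicot Require Export Coquelicot.
Open Scope R_scope.

Definition Gamma (x : R) : R :=
  RInt_gen (fun t => Rpower t (x - 1) * exp (- t)) (at_right 0) (Rbar_locally p_infty).

Definition P (a w : C) : C := Cplus (Cmult w w) a.

Definition Piter (a : C) (k : nat) : C := Nat.iter k (P a) (RtoC 0).

Definition Mandelbrot (a : C) : Prop :=
  exists M : R, forall n : nat, (1 <= n)%nat -> Cmod (Piter a n) <= M.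

Definition frac_julia_seq (q : R) (z0 : C) (z : nat -> C) : Prop :=
  z 0%nat = z0 /\
  forall n : nat, (1 <= n)%nat ->
    z n = Cplus z0
      (Cmult (RtoC (/ Gamma q))
        (sum_n_m (fun i : nat =>
           Cmult (RtoC (Gamma (INR (n - i) + q) / Gamma (INR (n - i) + 1)))
                 (Cmult (z (i - 1)%nat) (z (i - 1)%nat))) 1 n)).

(* Main.v *)
Require Import Defs.
From Stdlib Require Import Reals Lra Lia.
From Coquelicot Require Import Coquelicot.
Open Scope R_scope.

Lemma ball_R (m e y : R) : Rabs (y - m) < e -> ball m e y.
Proof. intros H. exact H. Qed.

Lemma gen_sup (f : R -> R) (M : R) :
  (forall a b, 0 < a -> 0 < b -> ex_RInt f a b) ->
  (forall t, 0 < t -> 0 <= f t) ->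
  (forall a b, 0 < a -> a < b -> RInt f a b <= M) ->
  exists l, is_RInt_gen f (at_right 0) (Rbar_locally p_infty) l /\
    (forall a b, 0 < a -> a < b -> RInt f a b <= l) /\ l <= M.
Proof.
  intros Hex Hpos HM.
  set (E := fun y : R => exists a b, 0 < a /\ a < b /\ y = RInt f a b).
  assert (Hb : bound E).
  { exists M. intros y (a & b & Ha & Hab & ->). now apply HM. }
  assert (Hne : exists y, E y).
  { exists (RInt f 1 2). exists 1, 2. repeat split; lra. }
  destruct (completeness E Hb Hne) as [m [Hub Hlub]].
  assert (Hle : forall a b, 0 < a -> a < b -> RInt f a b <= m).
  { intros a b Ha Hab. apply Hub. exists a, b. repeat split; auto. }
  exists m. split; [|split; auto].
  2: { apply Hlub. intros y (a & b & Ha & Hab & ->). now apply HM. }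
  apply filterlimi_lim_ext_loc with (f := fun ab => RInt f (fst ab) (snd ab)).
  - exists (fun a => 0 < a) (fun b => 0 < b).
    + exists (mkposreal 1 Rlt_0_1). intros y _ Hy. exact Hy.
    + exists 0. intros x Hx. exact Hx.
    + intros a b Ha Hb'. simpl. apply (@RInt_correct R_CompleteNormedModule). now apply Hex.
  - apply filterlim_locally. intros eps.
    assert (Hy : exists y, E y /\ m - eps < y).
    { destruct (Rlt_or_le (m - eps) m) as [_|Hc]; [|destruct eps; simpl in *; lra].
      apply Classical_Pred_Type.not_all_not_ex. intros Hn.
      assert (m <= m - eps).
      { apply Hlub. intros y Ey. destruct (Rle_or_lt y (m - eps)) as [H|H]; auto.
        exfalso. apply (Hn y). split; auto. }
      destruct eps; simpl in *; lra. }
    destruct Hy as [y [(a0 & b0 & Ha0 & Hab0 & ->) Hy]].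
    exists (fun a => 0 < a < a0) (fun b => b0 < b).
    + exists (mkposreal a0 Ha0). intros y Hb' Hy'. split; auto.
      unfold ball in Hb'; simpl in Hb'; unfold AbsRing_ball, abs, minus, plus, opp in Hb'; simpl in Hb'.
      apply Rabs_lt_between in Hb'. lra.
    + exists b0. intros x Hx. exact Hx.
    + intros a b [Ha Haa] Hbb. simpl. apply ball_R.
      assert (H1 : RInt f a b = RInt f a a0 + RInt f a0 b0 + RInt f b0 b).
      { rewrite <- (RInt_Chasles f a a0 b); try (apply Hex; lra).
        rewrite <- (RInt_Chasles f a0 b0 b); try (apply Hex; lra).
        unfold plus; simpl. ring. }
      assert (0 <= RInt f a a0).
      { apply RInt_ge_0; [lra| apply Hex; lra | intros; apply Hpos; lra]. }
      assert (0 <= RInt f b0 b).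
      { apply RInt_ge_0; [lra| apply Hex; lra | intros; apply Hpos; lra]. }
      assert (RInt f a b <= m) by (apply Hle; lra).
      apply Rabs_lt_between. split; lra.
Qed.

Definition gf (x : R) := fun t => Rpower t (x - 1) * exp (- t).

Lemma gf_cont x t : 0 < t -> continuous (gf x) t.
Proof. intros Ht. apply (@ex_derive_continuous R_AbsRing R_NormedModule). unfold gf, Rpower. auto_derive. lra. Qed.

Lemma gf_ex x a b : 0 < a -> 0 < b -> ex_RInt (gf x) a b.
Proof.
  intros Ha Hb. apply (@ex_RInt_continuous R_CompleteNormedModule).
  intros z Hz. apply gf_cont. assert (0 < Rmin a b) by (apply Rmin_glb_lt; auto). lra.
Qed.

Lemma gf_pos x t : 0 <= gf x t.
Proof. unfold gf, Rpower. apply Rmult_le_pos; apply Rlt_le, exp_pos. Qed.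

Lemma pow_int x a : 0 < a -> 0 < x ->
  RInt (fun t => Rpower t (x - 1)) a 1 = (1 - Rpower a x) / x.
Proof.
  intros Ha Hx.
  apply is_RInt_unique.
  assert (Hmin : 0 < Rmin a 1) by (apply Rmin_glb_lt; lra).
  assert (H := @is_RInt_derive R_CompleteNormedModule (fun t => Rpower t x / x)
     (fun t => Rpower t (x - 1)) a 1).
  replace ((1 - Rpower a x) / x) with (minus (Rpower 1 x / x) (Rpower a x / x)).
  2: { unfold minus, plus, opp; simpl. unfold Rpower. rewrite ln_1, Rmult_0_r, exp_0. field. lra. }
  apply H.
  - intros t Ht. assert (0 < t) by lra. unfold Rpower. auto_derive. lra.
    replace ((x - 1) * ln t) with (x * ln t + - ln t) by ring.
    rewrite exp_plus, exp_Ropp, exp_ln by lra. field. lra.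
  - intros t Ht. apply (@ex_derive_continuous R_AbsRing R_NormedModule). unfold Rpower. auto_derive. lra.
Qed.

Lemma ln_lt_id y : 0 < y -> ln y < y.
Proof.
  intros Hy. rewrite <- (ln_exp y) at 2. apply ln_increasing; auto.
  assert (H := exp_ineq1 y). lra.
Qed.

Lemma exp_int K b : 1 <= b ->
  RInt (fun t => exp (K - t / 2)) 1 b <= 2 * exp K.
Proof.
  intros Hb.
  assert (H := @is_RInt_derive R_CompleteNormedModule (fun t => -2 * exp (K - t/2))
     (fun t => exp (K - t / 2)) 1 b).
  assert (H1 : forall t, Rmin 1 b <= t <= Rmax 1 b -> is_derive (fun t => -2 * exp (K - t/2)) t (exp (K - t / 2))).
  { intros t _. auto_derive. auto. unfold Rminus, Rdiv. field. }
  assert (H2 : forall t, Rmin 1 b <= t <= Rmax 1 b -> continuous (fun t => exp (K - t / 2)) t).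
  { intros t _. apply (@ex_derive_continuous R_AbsRing R_NormedModule). auto_derive. auto. }
  rewrite (is_RInt_unique _ _ _ _ (H H1 H2)).
  unfold minus, plus, opp; simpl.
  assert (exp (K - 1/2) <= exp K). { apply Rlt_le, exp_increasing. lra. }
  assert (0 < exp (K - b/2)) by apply exp_pos. lra.
Qed.

Lemma gf_le_pow x t : 0 < t -> gf x t <= Rpower t (x - 1).
Proof.
  intros Ht. unfold gf.
  assert (exp (- t) < 1) by (rewrite <- exp_0; apply exp_increasing; lra).
  assert (0 < Rpower t (x - 1)) by (unfold Rpower; apply exp_pos).
  nra.
Qed.

Lemma gf_le_exp x N t : 1 <= t -> x <= N -> 1 <= N ->
  gf x t <= exp (N * ln (2 * N) - t / 2).
Proof.
  intros Ht HxN HN. unfold gf, Rpower. rewrite <- exp_plus.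
  destruct (Req_dec t 1) as [->|Ht1].
  - rewrite ln_1. apply Rlt_le, exp_increasing || (apply Req_le; f_equal).
    assert (0 < ln (2 * N)) by (rewrite <- ln_1; apply ln_increasing; lra).
    assert (0 < N * ln (2*N)) by nra. lra.
  - assert (Hl : 0 < ln t) by (rewrite <- ln_1; apply ln_increasing; lra).
    apply Rlt_le, exp_increasing.
    assert (H1 : (x - 1) * ln t <= N * ln t) by nra.
    assert (H2 : ln (t / (2 * N)) < t / (2 * N)) by (apply ln_lt_id; apply Rdiv_lt_0_compat; lra).
    rewrite ln_div in H2 by lra.
    assert (H3 : N * (ln t - ln (2 * N)) < N * (t / (2 * N))) by (apply Rmult_lt_compat_l; lra).
    replace (N * (t / (2 * N))) with (t / 2) in H3 by (field; lra).
    lra.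
Qed.

Lemma gamma_ex x N : 0 < x -> x <= N -> 1 <= N ->
  exists l, is_RInt_gen (gf x) (at_right 0) (Rbar_locally p_infty) l /\
    (forall a b, 0 < a -> a < b -> RInt (gf x) a b <= l) /\
    l <= 1 / x + 2 * exp (N * ln (2 * N)).
Proof.
  intros Hx HxN HN. apply gen_sup.
  - apply gf_ex.
  - intros; apply gf_pos.
  - intros a b Ha Hab.
    set (a' := Rmin a 1). set (b' := Rmax b 1).
    assert (Ha' : 0 < a') by (apply Rmin_glb_lt; lra).
    assert (Ha1 : a' <= a) by apply Rmin_l. assert (Ha2 : a' <= 1) by apply Rmin_r.
    assert (Hb1 : b <= b') by apply Rmax_l. assert (Hb2 : 1 <= b') by apply Rmax_r.
    assert (E1 : RInt (gf x) a' b' = RInt (gf x) a' a + RInt (gf x) a b + RInt (gf x) b b').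
    { rewrite <- (RInt_Chasles (gf x) a' a b'); try (apply gf_ex; lra).
      rewrite <- (RInt_Chasles (gf x) a b b'); try (apply gf_ex; lra).
      unfold plus; simpl. ring. }
    assert (0 <= RInt (gf x) a' a) by (apply RInt_ge_0; [lra|apply gf_ex; lra|intros; apply gf_pos]).
    assert (0 <= RInt (gf x) b b') by (apply RInt_ge_0; [lra|apply gf_ex; lra|intros; apply gf_pos]).
    assert (E2 : RInt (gf x) a' b' = RInt (gf x) a' 1 + RInt (gf x) 1 b').
    { rewrite <- (RInt_Chasles (gf x) a' 1 b'); try (apply gf_ex; lra). reflexivity. }
    assert (B1 : RInt (gf x) a' 1 <= 1 / x).
    { apply Rle_trans with (RInt (fun t => Rpower t (x - 1)) a' 1).
      - apply RInt_le; auto. apply gf_ex; lra.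
        apply (@ex_RInt_continuous R_CompleteNormedModule). intros z Hz.
        apply (@ex_derive_continuous R_AbsRing R_NormedModule). unfold Rpower. auto_derive.
        assert (0 < Rmin a' 1) by (apply Rmin_glb_lt; lra). lra.
        intros t Ht. apply gf_le_pow. lra.
      - rewrite pow_int by lra. assert (0 < Rpower a' x) by (unfold Rpower; apply exp_pos).
        unfold Rdiv. apply Rmult_le_compat_r. apply Rlt_le, Rinv_0_lt_compat; lra. lra. }
    assert (B2 : RInt (gf x) 1 b' <= 2 * exp (N * ln (2 * N))).
    { apply Rle_trans with (RInt (fun t => exp (N * ln (2 * N) - t / 2)) 1 b').
      - apply RInt_le; auto. apply gf_ex; lra.
        apply (@ex_RInt_continuous R_CompleteNormedModule). intros z Hz.
        apply (@ex_derive_continuous R_AbsRing R_NormedModule). auto_derive. auto.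
        intros t Ht. apply gf_le_exp; lra.
      - apply exp_int; lra. }
    lra.
Qed.

Lemma Gamma_eq x l : is_RInt_gen (gf x) (at_right 0) (Rbar_locally p_infty) l -> Gamma x = l.
Proof.
  intros H. unfold Gamma. change (RInt_gen (gf x) (at_right 0) (Rbar_locally p_infty) = l).
  apply (@is_RInt_gen_unique R_CompleteNormedModule); try apply Proper_StrongProper;
   try apply at_right_proper_filter; try apply Rbar_locally_filter. exact H.
Qed.

Lemma Rpow_ex a x : 0 < a -> 0 < x -> ex_RInt (fun t => Rpower t (x - 1)) a 1.
Proof.
  intros Ha Hx. apply (@ex_RInt_continuous R_CompleteNormedModule). intros z Hz.
  apply (@ex_derive_continuous R_AbsRing R_NormedModule). unfold Rpower. auto_derive.
  assert (0 < Rmin a 1) by (apply Rmin_glb_lt; lra). lra.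
Qed.

Lemma Gamma_lower q : 0 < q < 1 -> exp (-1) / (2 * q) <= Gamma q.
Proof.
  intros Hq.
  destruct (gamma_ex q 1) as [l [Hl [Hle _]]]; try lra.
  rewrite (Gamma_eq _ _ Hl).
  set (a := Rpower (1/2) (1/q)).
  assert (Ha : 0 < a) by (unfold a, Rpower; apply exp_pos).
  assert (Ha1 : a < 1).
  { assert (H : ln (1/2) < 0) by (rewrite <- ln_1; apply ln_increasing; lra).
    assert (Hq' : 0 < 1/q) by (apply Rdiv_lt_0_compat; lra).
    assert (H5 := Rmult_lt_compat_l (1/q) (ln (1/2)) 0 Hq' H). rewrite Rmult_0_r in H5.
    unfold a, Rpower. apply Rlt_le_trans with (exp 0); [apply exp_increasing; exact H5 | rewrite exp_0; lra]. }
  assert (Haq : Rpower a q = 1/2).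
  { unfold a. rewrite Rpower_mult. replace (1/q*q) with 1 by (field; lra). apply Rpower_1. lra. }
  apply Rle_trans with (RInt (gf q) a 1); [|apply Hle; auto].
  apply Rle_trans with (RInt (fun t => scal (exp (-1)) (Rpower t (q - 1))) a 1).
  - rewrite (@RInt_scal R_CompleteNormedModule) by (apply Rpow_ex; lra). rewrite pow_int by lra. rewrite Haq.
    unfold scal; simpl; unfold mult; simpl. apply Req_le. field. lra.
  - apply RInt_le. lra.
    apply (@ex_RInt_continuous R_CompleteNormedModule). intros z Hz.
    apply (@ex_derive_continuous R_AbsRing R_NormedModule). unfold scal; simpl; unfold mult; simpl. unfold Rpower. auto_derive.
    assert (0 < Rmin a 1) by (apply Rmin_glb_lt; lra). lra.
    apply gf_ex; lra.
    intros t Ht. unfold gf, scal; simpl; unfold mult; simpl.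
    rewrite Rmult_comm. apply Rmult_le_compat_l. unfold Rpower; apply Rlt_le, exp_pos.
    destruct (Req_dec t 1) as [->|]; [lra|]. apply Rlt_le, exp_increasing. lra.
Qed.

Lemma Gamma_pos q : 0 < q < 1 -> 0 < Gamma q.
Proof.
  intros Hq. apply Rlt_le_trans with (2 := Gamma_lower q Hq).
  apply Rdiv_lt_0_compat. apply exp_pos. lra.
Qed.

Lemma Gamma_bound (k : nat) q : (1 <= k)%nat -> 0 < q < 1 ->
  Rabs (Gamma (INR k + q)) <= 1 + 2 * exp ((INR k + 1) * ln (2 * (INR k + 1))).
Proof.
  intros Hk Hq. assert (Hk' : 1 <= INR k) by (apply (le_INR 1); auto).
  destruct (gamma_ex (INR k + q) (INR k + 1)) as [l [Hl [Hle Hb]]]; try lra.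
  rewrite (Gamma_eq _ _ Hl).
  assert (0 <= RInt (gf (INR k + q)) 1 2) by (apply RInt_ge_0; [lra|apply gf_ex; lra|intros; apply gf_pos]).
  assert (RInt (gf (INR k + q)) 1 2 <= l) by (apply Hle; lra).
  rewrite Rabs_right by lra.
  assert (1 / (INR k + q) <= 1).
  { unfold Rdiv. rewrite Rmult_1_l. rewrite <- Rinv_1. apply Rinv_le_contravar; lra. }
  lra.
Qed.

Lemma Gamma_one : Gamma 1 = 1.
Proof.
  assert (Hint : forall a b, 0 < a -> 0 < b -> RInt (gf 1) a b = exp (- a) - exp (- b)).
  { intros a b Ha Hb. apply is_RInt_unique.
    apply is_RInt_ext with (f := fun t => exp (- t)).
    { intros t _. unfold gf, Rpower. change (exp (- t) = exp ((1 - 1) * ln t) * exp (- t)). replace ((1 - 1) * ln t) with 0 by ring. rewrite exp_0. ring. }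
    assert (H := @is_RInt_derive R_CompleteNormedModule (fun t => - exp (- t))
       (fun t => exp (- t)) a b).
    replace (exp (- a) - exp (- b)) with (minus (- exp (- b)) (- exp (- a))).
    2: { unfold minus, plus, opp; simpl. ring. }
    apply H.
    - intros t _. auto_derive. auto. ring.
    - intros t _. apply (@ex_derive_continuous R_AbsRing R_NormedModule). auto_derive. auto. }
  destruct (gen_sup (gf 1) 1) as [l [Hl [Hle Hb]]].
  - apply gf_ex.
  - intros; apply gf_pos.
  - intros a b Ha Hab. rewrite Hint by lra.
    assert (exp (- a) < 1) by (rewrite <- exp_0; apply exp_increasing; lra).
    assert (0 < exp (- b)) by apply exp_pos. lra.
  - rewrite (Gamma_eq _ _ Hl).
    apply Rle_antisym; auto.
    destruct (Rle_or_lt 1 l) as [H|H]; auto. exfalso.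
    set (e := Rmin (1/2) ((1 - l) / 4)).
    assert (He : 0 < e) by (apply Rmin_glb_lt; lra).
    assert (He1 : e <= 1/2) by apply Rmin_l.
    assert (He2 : e <= (1 - l) / 4) by apply Rmin_r.
    assert (Hie : e < / e).
    { apply Rlt_le_trans with 1. lra. rewrite <- Rinv_1 at 1. apply Rinv_le_contravar; lra. }
    assert (H1 := Hle e (/ e) He Hie). rewrite Hint in H1 by (try apply Rinv_0_lt_compat; lra).
    assert (H2 : 1 - e < exp (- e)) by (assert (H3 := exp_ineq1 (- e)); lra).
    assert (H3 : exp (- / e) < e).
    { rewrite exp_Ropp. assert (H4 := exp_ineq1 (/ e)).
      assert (0 < / e) by (apply Rinv_0_lt_compat; lra).
      rewrite <- (Rinv_inv e) at 2. apply Rinv_lt_contravar. nra. lra. }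
    lra.
Qed.

Lemma lim_Cplus (F : (R -> Prop) -> Prop) (FF : Filter F) f g a b :
  filterlim f F (locally a) -> filterlim g F (locally b) ->
  filterlim (fun x => Cplus (f x) (g x)) F (locally (Cplus a b)).
Proof.
  intros Hf Hg. eapply filterlim_comp_2; [exact Hf|exact Hg|].
  apply (@filterlim_plus C_AbsRing C_NormedModule).
Qed.

Lemma lim_Cmult (F : (R -> Prop) -> Prop) (FF : Filter F) f g a b :
  filterlim f F (locally a) -> filterlim g F (locally b) ->
  filterlim (fun x => Cmult (f x) (g x)) F (locally (Cmult a b)).
Proof.
  intros Hf Hg. eapply filterlim_comp_2; [exact Hf|exact Hg|].
  intros P HP. apply locally_C in HP.
  destruct (@filterlim_mult C_AbsRing a b P HP) as [Q R HQ HR HQR].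
  exists Q R; [apply locally_C; exact HQ|apply locally_C; exact HR|exact HQR].
Qed.

Lemma ball0 (y d : R) : ball 0 d y -> -d < y < d.
Proof.
  intros Hy. unfold ball in Hy; simpl in Hy; unfold AbsRing_ball, abs, minus, plus, opp in Hy; simpl in Hy.
  apply Rabs_lt_between in Hy. lra.
Qed.

Lemma C_lim_of_R (f : R -> R) :
  (forall eps, 0 < eps -> exists d, 0 < d /\ forall q, 0 < q < d -> Rabs (f q) < eps) ->
  filterlim (fun q => RtoC (f q)) (at_right 0) (locally (RtoC 0)).
Proof.
  intros H. apply filterlim_locally. intros eps.
  destruct (H eps (cond_pos eps)) as [d [Hd Hq]].
  exists (mkposreal d Hd). intros y Hy Hy0. apply ball0 in Hy. simpl in Hy.
  apply C_NormedModule_mixin_compat1.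
  replace (minus (RtoC (f y)) (RtoC 0)) with (RtoC (f y)).
  - rewrite Cmod_R. apply Hq. lra.
  - unfold minus, plus, opp; simpl. unfold Cplus, Copp, RtoC; simpl. f_equal; ring.
Qed.

Definition cc (k : nat) (q : R) := / Gamma q * (Gamma (INR k + q) / Gamma (INR k + 1)).

Lemma cc_lim k : (1 <= k)%nat ->
  filterlim (fun q => RtoC (cc k q)) (at_right 0) (locally (RtoC 0)).
Proof.
  intros Hk. apply C_lim_of_R. intros eps Heps.
  set (B := 1 + 2 * exp ((INR k + 1) * ln (2 * (INR k + 1)))).
  set (C0 := 2 * exp 1 * B * Rabs (/ Gamma (INR k + 1))).
  assert (HB : 0 <= B) by (unfold B; assert (0 < exp ((INR k + 1) * ln (2 * (INR k + 1)))) by apply exp_pos; lra).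
  assert (HC0 : 0 <= C0).
  { unfold C0. apply Rmult_le_pos; [|apply Rabs_pos]. apply Rmult_le_pos; auto.
    assert (0 < exp 1) by apply exp_pos. lra. }
  exists (Rmin 1 (eps / (C0 + 1))). split.
  { apply Rmin_glb_lt. lra. apply Rdiv_lt_0_compat; lra. }
  intros q Hq.
  assert (Hq1 : q < 1) by (apply Rlt_le_trans with (1 := proj2 Hq); apply Rmin_l).
  assert (Hq2 : q < eps / (C0 + 1)) by (apply Rlt_le_trans with (1 := proj2 Hq); apply Rmin_r).
  assert (HG := Gamma_lower q (conj (proj1 Hq) Hq1)).
  assert (HGp := Gamma_pos q (conj (proj1 Hq) Hq1)).
  assert (Hinv : / Gamma q <= 2 * exp 1 * q).
  { replace (2 * exp 1 * q) with (/ (exp (-1) / (2 * q))).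
    - apply Rinv_le_contravar; auto. apply Rdiv_lt_0_compat. apply exp_pos. lra.
    - assert (E : exp (-1) = / exp 1) by (rewrite <- exp_Ropp; f_equal; ring).
      rewrite E. assert (exp 1 <> 0) by (apply Rgt_not_eq, exp_pos). field. repeat split; auto; lra. }
  assert (Hb := Gamma_bound k q Hk (conj (proj1 Hq) Hq1)). fold B in Hb.
  unfold cc. unfold Rdiv. rewrite !Rabs_mult. rewrite (Rabs_right (/ Gamma q)).
  2: { apply Rle_ge, Rlt_le, Rinv_0_lt_compat; auto. }
  apply Rle_lt_trans with (2 * exp 1 * q * (B * Rabs (/ Gamma (INR k + 1)))).
  - apply Rmult_le_compat; auto.
    + apply Rlt_le, Rinv_0_lt_compat; auto.
    + apply Rmult_le_pos; apply Rabs_pos.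
    + apply Rmult_le_compat_r; auto. apply Rabs_pos.
  - replace (2 * exp 1 * q * (B * Rabs (/ Gamma (INR k + 1)))) with (C0 * q) by (unfold C0; ring).
    apply Rle_lt_trans with ((C0 + 1) * q). nra.
    apply Rmult_lt_reg_r with (/ (C0 + 1)). apply Rinv_0_lt_compat; lra.
    replace ((C0 + 1) * q * / (C0 + 1)) with q by (field; lra). exact Hq2.
Qed.

Lemma sum_lim0 (h : R -> C) (g : nat -> R -> C) (a b : nat) :
  (forall i, (a <= i <= b)%nat ->
     filterlim (fun q => Cmult (h q) (g i q)) (at_right 0) (locally (RtoC 0))) ->
  filterlim (fun q => Cmult (h q) (sum_n_m (fun i => g i q) a b)) (at_right 0) (locally (RtoC 0)).
Proof.
  induction b as [|b IH]; intros Hg.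
  - destruct a as [|a].
    + apply filterlim_ext with (f := fun q => Cmult (h q) (g 0%nat q)).
      * intros q. rewrite sum_n_n. reflexivity.
      * apply Hg. lia.
    + apply filterlim_ext with (f := fun q => RtoC 0).
      * intros q. rewrite sum_n_m_zero by lia. unfold zero; simpl. unfold Cmult, RtoC; simpl. f_equal; ring.
      * apply filterlim_const.
  - destruct (Nat.lt_trichotomy a (S b)) as [Hlt|[Heq|Hgt]].
    + apply filterlim_ext with (f := fun q => Cplus (Cmult (h q) (sum_n_m (fun i => g i q) a b)) (Cmult (h q) (g (S b) q))).
      * intros q. rewrite sum_n_Sm by lia. unfold plus; simpl. ring.
      * replace (RtoC 0) with (Cplus (RtoC 0) (RtoC 0)) by (unfold Cplus, RtoC; simpl; f_equal; ring).
        apply lim_Cplus. apply at_right_proper_filter.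
        apply IH. intros i Hi. apply Hg. lia. apply Hg. lia.
    + subst a. apply filterlim_ext with (f := fun q => Cmult (h q) (g (S b) q)).
      * intros q. rewrite sum_n_n. reflexivity.
      * apply Hg. lia.
    + apply filterlim_ext with (f := fun q => RtoC 0).
      * intros q. rewrite sum_n_m_zero by lia. unfold zero; simpl. unfold Cmult, RtoC; simpl. f_equal; ring.
      * apply filterlim_const.
Qed.

Lemma ev01 : at_right 0 (fun q => 0 < q < 1).
Proof. exists (mkposreal 1 Rlt_0_1). intros y Hy Hy0. apply ball0 in Hy. simpl in Hy. lra. Qed.

Theorem proposition2 :
  forall z : R -> C -> nat -> C,
    (forall q z0, 0 < q < 1 -> frac_julia_seq q z0 (z q z0)) ->
    (forall z0 (n : nat),
        filterlim (fun q => z q z0 n) (at_right 0) (locally (Piter z0 (S n))))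
    /\
    (forall z0 (w : nat -> C),
        (forall n, filterlim (fun q => z q z0 n) (at_right 0) (locally (w n))) ->
        ((exists M : R, forall n, Cmod (w n) <= M) <-> Mandelbrot z0)).
Proof.
  intros z Hz.
  assert (Hlim : forall z0 n, filterlim (fun q => z q z0 n) (at_right 0) (locally (Piter z0 (S n)))).
  { intros z0.
    assert (Hs : forall n k, (k <= n)%nat -> filterlim (fun q => z q z0 k) (at_right 0) (locally (Piter z0 (S k)))).
    2: { intros n. apply (Hs n n). lia. }
    induction n as [|n IH]; intros k Hk.
    - assert (k = 0%nat) by lia. subst k.
      replace (Piter z0 1) with z0 by (simpl; unfold P; ring).
      apply filterlim_ext_loc with (f := fun _ => z0).
      + apply filter_imp with (2 := ev01). intros q Hq. symmetry. apply (Hz q z0 Hq).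
      + apply filterlim_const.
    - destruct (Nat.le_gt_cases k n) as [Hkn|Hkn]. { apply IH; auto. }
      assert (k = S n) by lia. subst k.
      set (L := Piter z0 (S n)).
      set (g := fun (i : nat) (q : R) => Cmult (RtoC (Gamma (INR (S n - i) + q) / Gamma (INR (S n - i) + 1)))
                 (Cmult (z q z0 (i - 1)%nat) (z q z0 (i - 1)%nat))).
      apply filterlim_ext_loc with
        (f := fun q => Cplus z0 (Cplus (Cmult (RtoC (/ Gamma q)) (sum_n_m (fun i => g i q) 1 n))
                                       (Cmult (z q z0 n) (z q z0 n)))).
      + apply filter_imp with (2 := ev01). intros q Hq.
        destruct (Hz q z0 Hq) as [_ Hrec]. rewrite (Hrec (S n)) by lia.
        f_equal.
        change (sum_n_m (fun i : nat => _) 1 (S n)) with (sum_n_m (fun i : nat => g i q) 1 (S n)).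
        rewrite sum_n_Sm by lia. change (plus ?a ?b) with (Cplus a b).
        rewrite Cmult_plus_distr_l. f_equal.
        unfold g. rewrite Nat.sub_diag. replace (S n - 1)%nat with n by lia.
        rewrite INR_0, !Rplus_0_l, Gamma_one.
        assert (HG := Gamma_pos q Hq).
        rewrite Cmult_assoc, <- RtoC_mult.
        replace (/ Gamma q * (Gamma q / 1)) with 1 by (field; lra). ring.
      + replace (Piter z0 (S (S n))) with (Cplus z0 (Cplus (RtoC 0) (Cmult L L))).
        2: { unfold L. simpl. unfold P. ring. }
        apply lim_Cplus. apply at_right_proper_filter. apply filterlim_const.
        apply lim_Cplus. apply at_right_proper_filter.
        * apply sum_lim0. intros i Hi.
          apply filterlim_ext with (f := fun q => Cmult (RtoC (cc (S n - i) q)) (Cmult (z q z0 (i - 1)%nat) (z q z0 (i - 1)%nat))).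
          { intros q. unfold g, cc. rewrite !RtoC_mult. ring. }
          replace (RtoC 0) with (Cmult (RtoC 0) (Cmult (Piter z0 (S (i - 1))) (Piter z0 (S (i - 1))))) by ring.
          apply lim_Cmult. apply at_right_proper_filter. apply cc_lim. lia.
          apply lim_Cmult. apply at_right_proper_filter. apply IH. lia. apply IH. lia.
        * apply lim_Cmult. apply at_right_proper_filter. apply IH; lia. apply IH; lia. }
  split; [exact Hlim|].
  intros z0 w Hw.
  assert (Hweq : forall n, w n = Piter z0 (S n)).
  { intros n. apply (@filterlim_locally_unique _ C_AbsRing C_NormedModule (at_right 0)
       (Proper_StrongProper _ (at_right_proper_filter 0)) (fun q => z q z0 n)).
    apply Hw. apply Hlim. }
  split.
  - intros [M HM]. exists M. intros n Hn. destruct n as [|n]; [lia|].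
    rewrite <- Hweq. apply HM.
  - intros [M HM]. exists M. intros n. rewrite Hweq. apply HM. lia.
Qed.
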